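(* Let $m\ge 2$ and let $H=\{0,h_1,\dots,h_{m-1}\}$ be a set of $m$ integers in which all the distances $h_1,\dots,h_{m-1}$ are even. Let $D=\gcd(h_1,\dots,h_{m-1})$ and let $c$ be a natural number all of whose prime divisors divide $D$. Put $c\cdot H=\{0,ch_1,\dots,ch_{m-1}\}$. Then $$\mathfrak{S}(c\cdot H)=\mathfrak{S}(H).$$
   Context: For a finite set $H$ of $m$ integers, $\nu_p(H)$ denotes the number of distinct residues modulo $p$ among the elements of $H$. The Selberg (singular series) constant is $$\mathfrak{S}(H)=\prod_{p}\Big(1-\frac{\nu_p(H)}{p}\Big)\Big(1-\frac1p\Big)^{-m},$$ where the product runs over all primes $p$. *)

(* Defs.v *)
From mathcomp Require Import all_boot all_order all_algebra.
From mathcomp Require Import all_classical all_reals all_analysis.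
Set Implicit Arguments. Unset Strict Implicit. Unset Printing Implicit Defensive.
Import Order.TTheory GRing.Theory Num.Theory numFieldNormedType.Exports.
Local Open Scope ring_scope.

(* A finite set H of integers is represented by a duplicate-free seq. *)
Definition nu (p : nat) (H : seq int) : nat :=
  size (undup [seq (x %% (p%:Z))%Z | x <- H]).

Definition sing_factor (R : realType) (H : seq int) (p : nat) : R :=
  (1 - (nu p H)%:R / p%:R) * ((1 - 1 / p%:R) ^- (size H)).

Definition sing_partial (R : realType) (H : seq int) (N : nat) : R :=
  \prod_(p < N | prime p) sing_factor R H p.

Definition singS (R : realType) (H : seq int) : R :=
  limn (sing_partial R H).

Definition gcd_seq (s : seq int) : int := \big[gcdz/0%Z]_(x <- s) x.

(* Main.v *)
Require Import Defs.
From mathcomp Require Import all_boot all_order all_algebra.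
From mathcomp Require Import all_classical all_reals all_analysis.
Import Order.TTheory GRing.Theory Num.Theory.
Local Open Scope ring_scope.

Lemma size_undup_map_eq (T U V : eqType) (f : T -> U) (g : T -> V) (s : seq T) :
  {in s &, forall x y, (g x == g y) = (f x == f y)} ->
  size (undup (map g s)) = size (undup (map f s)).
Proof.
elim: s => [//|a l IH] H /=.
have H' : {in l &, forall x y, (g x == g y) = (f x == f y)}.
  by move=> x y hx hy; apply: H; rewrite inE ?hx ?hy orbT.
have E : (g a \in map g l) = (f a \in map f l).
  apply/mapP/mapP => [[y hy e]|[y hy e]]; exists y => //; apply/eqP.
    by rewrite -H ?inE ?eqxx ?hy ?orbT //; apply/eqP.
  by rewrite H ?inE ?eqxx ?hy ?orbT //; apply/eqP.
by rewrite E; case: ifP => _ /=; rewrite IH.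
Qed.

Lemma gcd_seq_dvd (h : seq int) x : x \in h -> (gcd_seq h %| x)%Z.
Proof.
rewrite /gcd_seq; elim: h => [//|a l IH]; rewrite inE big_cons => /orP [/eqP->|hx].
  exact: dvdz_gcdl.
exact: dvdz_trans (dvdz_gcdr _ _) (IH hx).
Qed.

Lemma nu_eq (h : seq int) (c : nat) p : prime p -> (0 < c)%N ->
  (forall p : nat, prime p -> (p %| c)%N -> ((p%:Z) %| gcd_seq h)%Z) ->
  nu p (0%Z :: [seq (c%:Z * x)%R | x <- h]) = nu p (0%Z :: h).
Proof.
move=> pp c0 Hc; rewrite /nu.
have -> : (0%Z :: [seq (c%:Z * x)%R | x <- h]) = map (fun x => c%:Z * x) (0%Z :: h).
  by rewrite /= mulr0.
rewrite -map_comp.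
case: (boolP (p %| c)%N) => pc.
  congr (size (undup _)); apply/eq_in_map => x hx /=.
  have pd : (p%:Z %| x)%Z.
    move: hx; rewrite inE => /orP [/eqP->|hx]; first exact: dvdz0.
    apply: (dvdz_trans (Hc p pp pc)); exact: gcd_seq_dvd.
  by apply/eqP; rewrite eqz_mod_dvd -{2}(mul1r x) -mulrBl; apply: dvdz_mull.
apply: (@size_undup_map_eq _ _ _ (fun x => (x %% p)%Z)) => x y _ _ /=.
rewrite !eqz_mod_dvd -mulrBr Gauss_dvdzr //.
have /eqP cp : div.coprime p c by rewrite prime_coprime.
by rewrite /coprimez /gcdz /= cp.
Qed.

Theorem mainTheorem1 (R : realType) (h : seq int) (c : nat) :
  (2 <= (size h).+1)%N ->
  uniq (0%Z :: h) ->
  (forall x, x \in h -> (2 %| x)%Z) ->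
  (0 < c)%N ->
  (forall p : nat, prime p -> (p %| c)%N -> ((p%:Z) %| gcd_seq h)%Z) ->
  singS R (0%Z :: [seq (c%:Z * x)%R | x <- h]) = singS R (0%Z :: h).
Proof.
move=> _ _ _ c0 Hc; rewrite /singS.
suff -> : sing_partial R (0%Z :: [seq (c%:Z * x)%R | x <- h]) = sing_partial R (0%Z :: h) by [].
apply: funext => N.
rewrite /sing_partial; apply: eq_bigr => p pp.
have Hs : size (0%Z :: [seq (c%:Z * x)%R | x <- h]) = size (0%Z :: h) by rewrite /= size_map.
rewrite /sing_factor nu_eq // Hs; exact: erefl.
Qed.
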